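(* Let $\langle A,C,d,O,v,(\prec_a)_{a\in A}\rangle$ be an infinite sequential game, let $\Gamma\subseteq\mathcal{P}(C^\omega)$, and assume: (1) every $\prec_a$ is a strict weak order; (2) the win-lose game $\langle C,D,W\rangle$ is determined for all $W\in\Gamma$ and $D\subseteq C^*$; (3) for every $a\in A$, every $\prec_a$-terminal interval $I$ and every $\gamma\in C^*$, $v^{-1}[I]\cap\gamma C^\omega\in\Gamma$; (4) for every $a\in A$, play $p\in C^\omega$ and increasing $\varphi:\mathbb{N}\to\mathbb{N}$, if $d(p_{<\varphi(n)})=a$ and $G_a(p_{<\varphi(n+1)})\subsetneq G_a(p_{<\varphi(n)})$ for all $n\in\mathbb{N}$, then $v(p)\in\bigcap_{n\in\mathbb{N}}G_a(p_{<\varphi(n)})$; (5) for every $a\in A$ and every $\gamma\in C^*$ there exists a strategy $s$ of $a$ with $g_a(\gamma,s)=G_a(\gamma)$. Then the game has a Nash equilibrium.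
   Context: The game consists of non-empty sets $A$ (agents), $C$ (choices), $O$ (outcomes), $d:C^*\to A$ (chooser after each history), $v:C^\omega\to O$, and preferences $\prec_a$ on $O$. A strategy of $a$ is a function $s:d^{-1}(\{a\})\to C$; a profile is identified with $\sigma:C^*\to C$, inducing the play $p(\sigma)$ with $p_n=\sigma(p_{<n})$ ($p_{<n}$ the length-$n$ prefix). $\sigma$ is a Nash equilibrium if there is no agent $a$ and strategy $s$ of $a$ with $v(p(\sigma))\prec_a v(p(\sigma_{a\mapsto s}))$, where $\sigma_{a\mapsto s}$ agrees with $s$ on $d^{-1}(\{a\})$ and with $\sigma$ elsewhere. For partial $t:\subseteq C^*\to C$, $P(t)$ is the set of plays of total profiles extending $t$. For a strategy $s$ of $a$ and $\gamma\in C^*$, $s|_\gamma$ is its restriction to histories extending $\gamma$; $g_a(\gamma,s):=\{o\in O\mid\exists p\in P(s|_\gamma)\cap\gamma C^\omega,\ \neg(o\prec_a v(p))\}$ and $G_a(\gamma):=\bigcap_s g_a(\gamma,s)$ over all strategies $s$ of $a$. A strict weak order is an irreflexive, transitive relation with $\neg(x\prec y)\wedge\neg(y\prec z)\Rightarrow\neg(x\prec z)$. A $\prec_a$-terminal interval is a set $I\subseteq O$ such that $o\in I$ and $\neg(o'\prec_a o)$ imply $o'\in I$. The win-lose game $\langle C,D,W\rangle$ is the two-player game where the first player chooses after histories in $D$, the second after histories in $C^*\setminus D$, and the first player wins iff the play lies in $W$; it is determined if one player has a winning strategy. *)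

(* Defs.v *)
From Stdlib Require Import List Arith ClassicalEpsilon.
Import ListNotations.
Unset Implicit Arguments.

Section Games.
Variables (A C O : Type).

Definition combine (P : list C -> Prop) (s1 : forall h, P h -> C)
  (s2 : forall h, ~ P h -> C) : list C -> C :=
  fun h => match excluded_middle_informative (P h) with
           | left e => s1 h e
           | right ne => s2 h ne
           end.

Definition pre (p : nat -> C) (n : nat) : list C := map p (seq 0 n).

Fixpoint hist (sigma : list C -> C) (n : nat) : list C :=
  match n with
  | 0 => []
  | S k => hist sigma k ++ [sigma (hist sigma k)]
  end.

Definition play (sigma : list C -> C) : nat -> C := fun n => sigma (hist sigma n).

Definition in_cone (gamma : list C) (p : nat -> C) : Prop :=
  pre p (length gamma) = gamma.

Definition extends (gamma h : list C) : Prop := exists t, h = gamma ++ t.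

(* win-lose game <C,D,W>: first player plays at histories in D *)
Definition determined (D : list C -> Prop) (W : (nat -> C) -> Prop) : Prop :=
  (exists s1 : forall h, D h -> C, forall s2 : forall h, ~ D h -> C,
      W (play (combine D s1 s2))) \/
  (exists s2 : forall h, ~ D h -> C, forall s1 : forall h, D h -> C,
      ~ W (play (combine D s1 s2))).

Variables (d : list C -> A) (v : (nat -> C) -> O) (pref : A -> O -> O -> Prop).

Definition strategy (a : A) : Type := forall h : list C, d h = a -> C.

Definition deviate (sigma : list C -> C) (a : A) (s : strategy a) : list C -> C :=
  combine (fun h => d h = a) s (fun h _ => sigma h).

Definition nash (sigma : list C -> C) : Prop :=
  ~ exists (a : A) (s : strategy a),
      pref a (v (play sigma)) (v (play (deviate sigma a s))).

(* P(t) for the partial profile t = s|_gamma *)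
Definition P_restr (a : A) (s : strategy a) (gamma : list C) (p : nat -> C) : Prop :=
  exists sigma : list C -> C,
    (forall h (e : d h = a), extends gamma h -> sigma h = s h e) /\ p = play sigma.

Definition g_ (a : A) (gamma : list C) (s : strategy a) (o : O) : Prop :=
  exists p, P_restr a s gamma p /\ in_cone gamma p /\ ~ pref a o (v p).

Definition G_ (a : A) (gamma : list C) (o : O) : Prop :=
  forall s : strategy a, g_ a gamma s o.

Definition strict_weak_order (R : O -> O -> Prop) : Prop :=
  (forall x, ~ R x x) /\
  (forall x y z, R x y -> R y z -> R x z) /\
  (forall x y z, ~ R x y -> ~ R y z -> ~ R x z).

Definition terminal_interval (a : A) (I : O -> Prop) : Prop :=
  forall o o', I o -> ~ pref a o' o -> I o'.

End Games.

Arguments combine {C}.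
Arguments pre {C}.
Arguments hist {C}.
Arguments play {C}.
Arguments in_cone {C}.
Arguments extends {C}.
Arguments determined {C}.
Arguments strategy {A C}.
Arguments deviate {A C}.
Arguments nash {A C O}.
Arguments P_restr {A C}.
Arguments g_ {A C O}.
Arguments G_ {A C O}.
Arguments strict_weak_order {O}.
Arguments terminal_interval {A O}.

(* Main.v *)
Require Import Defs.
From Stdlib Require Import List Arith ClassicalEpsilon.
From Stdlib Require Import Lia Classical FunctionalExtensionality ProofIrrelevance.
Import ListNotations.

Lemma pre_S {C} (q : nat -> C) n : pre q (S n) = pre q n ++ [q n].
Proof. unfold pre. rewrite seq_S, map_app. reflexivity. Qed.

Lemma pre_length {C} (q : nat -> C) n : length (pre q n) = n.
Proof. unfold pre. rewrite length_map, length_seq. reflexivity. Qed.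

Lemma firstn_pre {C} (q : nat -> C) k n : k <= n -> firstn k (pre q n) = pre q k.
Proof.
  intros H. induction H.
  - rewrite <- (pre_length q k) at 1. apply firstn_all.
  - rewrite pre_S, firstn_app, IHle, pre_length.
    replace (k - m) with 0 by lia. simpl. apply app_nil_r.
Qed.

Lemma hist_pre {C} (s : list C -> C) n : hist s n = pre (play s) n.
Proof.
  induction n; [reflexivity|]. simpl. rewrite pre_S, IHn. unfold play. rewrite IHn. reflexivity.
Qed.

Lemma play_S {C} (s : list C -> C) n : play s n = s (pre (play s) n).
Proof. unfold play at 1. rewrite hist_pre. reflexivity. Qed.

Lemma pre_play_S {C} (s : list C -> C) n :
  pre (play s) (S n) = pre (play s) n ++ [s (pre (play s) n)].
Proof. rewrite pre_S, play_S. reflexivity. Qed.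

Lemma pre_eq_fun {C} (q1 q2 : nat -> C) : (forall n, pre q1 n = pre q2 n) -> q1 = q2.
Proof.
  intros H. apply functional_extensionality. intros n.
  specialize (H (S n)). rewrite !pre_S in H. apply app_inj_tail in H. destruct H as [_ H].
  congruence.
Qed.

Lemma pre_eq_lt {C} (q1 q2 : nat -> C) n m : pre q1 n = pre q2 n -> m < n -> q1 m = q2 m.
Proof.
  intros H Hm.
  assert (E : firstn (S m) (pre q1 n) = firstn (S m) (pre q2 n)) by congruence.
  rewrite !firstn_pre in E by lia. rewrite !pre_S in E. apply app_inj_tail in E. tauto.
Qed.

Lemma extends_pre {C} (q : nat -> C) k j : k <= j -> extends (pre q k) (pre q j).
Proof.
  intros H. exists (skipn k (pre q j)). rewrite <- (firstn_pre q k j H) at 1.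
  symmetry. apply firstn_skipn.
Qed.

Lemma extends_len {C} (g h : list C) : extends g h -> length g <= length h.
Proof. intros [t ->]. rewrite length_app. lia. Qed.

Lemma cone_extends {C} (g : list C) q n : in_cone g q -> length g <= n -> extends g (pre q n).
Proof. unfold in_cone. intros H Hn. rewrite <- H. apply extends_pre. exact Hn. Qed.

Lemma play_ext {C} (s1 s2 : list C -> C) :
  (forall h, s1 h = s2 h) -> play s1 = play s2.
Proof. intros H. assert (s1 = s2) by (apply functional_extensionality; auto). subst; auto. Qed.

Lemma play_cone {C} (g : list C) (s1 s2 : list C -> C) :
  in_cone g (play s1) -> in_cone g (play s2) ->
  (forall h, extends g h -> s1 h = s2 h) -> play s1 = play s2.
Proof.
  intros H1 H2 H. apply pre_eq_fun. intros n. induction n; [reflexivity|].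
  destruct (le_lt_dec (length g) n).
  - rewrite !pre_play_S, IHn. f_equal. f_equal. apply H. rewrite <- IHn. apply cone_extends; auto.
  - unfold in_cone in *. rewrite <- (firstn_pre (play s1) (S n) (length g)) by lia.
    rewrite <- (firstn_pre (play s2) (S n) (length g)) by lia. congruence.
Qed.

Lemma least_ex (P : nat -> Prop) : (exists n, P n) -> exists n, P n /\ forall m, P m -> n <= m.
Proof.
  intros [n0 Hn]. apply NNPP. intros Hno. revert Hn.
  revert n0. intros n0. pattern n0. apply lt_wf_ind. clear n0. intros n IH Hn. apply Hno. exists n. split; auto.
  intros m Hm. apply NNPP. intros Hlt. apply (IH m); auto. lia.
Qed.

Lemma greatest_ex (P : nat -> Prop) N i : i <= N -> P i ->
  exists n, i <= n <= N /\ P n /\ forall j, n < j <= N -> ~ P j.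
Proof.
  induction N; intros Hi HP.
  - exists i. split; [lia|]. split; auto. intros; lia.
  - destruct (classic (P (S N))).
    + exists (S N). split; [lia|]. split; auto. intros; lia.
    + destruct (Nat.eq_dec i (S N)) as [Ei|Ei]; [subst; tauto|].
      destruct IHN as [n [Hn [Pn Hg]]]; [lia|auto|].
      exists n. split; [lia|]. split; auto. intros j Hj.
      destruct (Nat.eq_dec j (S N)) as [Ej|Ej]; [subst; auto|]. apply Hg; lia.
Qed.

Lemma gsub {A C O} d v pref (a:A) (s : strategy d a) (q : nat -> C) k n (o : O) :
  k <= n ->
  (forall j h (e : d h = a), h = pre q j -> k <= j -> j < n -> s h e = q j) ->
  g_ d v pref a (pre q n) s o -> g_ d v pref a (pre q k) s o.
Proof.
  intros Hkn Hs [r [[sg [Hsg Hr]] [Hc Hno]]].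
  exists r. split; [|split; [|exact Hno]].
  - exists (Defs.combine (fun h => d h = a /\ extends (pre q k) h) (fun h H => s h (proj1 H)) (fun h _ => sg h)).
    split.
    + intros h e Hext. unfold Defs.combine.
      destruct (excluded_middle_informative _) as [H|H].
      * f_equal. apply proof_irrelevance.
      * exfalso. auto.
    + subst r. symmetry. apply pre_eq_fun. intros m. induction m; [reflexivity|].
      rewrite !pre_play_S, IHm. f_equal. f_equal. unfold Defs.combine.
      destruct (excluded_middle_informative _) as [[e He]|H]; [|reflexivity]. simpl.
      unfold in_cone in Hc. rewrite pre_length in Hc.
      destruct (le_lt_dec n m).
      * symmetry. apply Hsg. rewrite <- Hc. apply extends_pre. auto.
      * rewrite <- play_S.
        assert (Hpm : pre (play sg) m = pre q m).
        { rewrite <- (firstn_pre (play sg) m n) by lia. rewrite Hc. apply firstn_pre. lia. }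
        rewrite (pre_eq_lt (play sg) q n m Hc l).
        apply (Hs m); auto.
        rewrite Hpm in He. apply extends_len in He. rewrite !pre_length in He. auto.
  - unfold in_cone in *. rewrite pre_length in *.
    rewrite <- (firstn_pre r k n) by auto. rewrite Hc. apply firstn_pre; auto.
Qed.

Lemma G_step {A C O} d v pref (a:A) (g : list C) (c : C) (o : O) :
  d g = a -> G_ d v pref a g o -> G_ d v pref a (g ++ [c]) o.
Proof.
  intros Hd HG s.
  pose (s' := fun h (e : d h = a) => match excluded_middle_informative (h = g) with
                                     | left _ => c | right _ => s h e end).
  destruct (HG s') as [r [[sg [Hsg Hr]] [Hc Hno]]].
  exists r. split; [|split; [|exact Hno]].
  - exists sg. split; auto. intros h e Hext. rewrite (Hsg h e).
    + unfold s'. destruct (excluded_middle_informative _) as [E|E]; auto.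
      subst h. apply extends_len in Hext. rewrite length_app in Hext. simpl in Hext. lia.
    + destruct Hext as [t ->]. exists ([c] ++ t). symmetry. apply app_assoc.
  - unfold in_cone in *. rewrite length_app. simpl. rewrite Nat.add_1_r.
    rewrite pre_S. rewrite Hc. f_equal. f_equal. subst r. rewrite play_S.
    rewrite Hc. rewrite (Hsg g Hd). unfold s'. destruct (excluded_middle_informative _); tauto.
    exists []. symmetry. apply app_nil_r.
Qed.

Lemma punish {A C O} d v (pref : A -> O -> O -> Prop) Gamma (c0 : C)
  (H1 : forall a, strict_weak_order (pref a))
  (H2 : forall W, Gamma W -> forall D : list C -> Prop, determined D W)
  (H3 : forall a (I : O -> Prop) (gamma : list C), terminal_interval pref a I ->
          Gamma (fun p => I (v p) /\ in_cone gamma p))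
  (a : A) (g : list C) (o0 : O) :
  G_ d v pref a g o0 ->
  exists f : list C -> C, forall sg, (forall h, extends g h -> d h <> a -> sg h = f h) ->
     in_cone g (play sg) -> ~ pref a o0 (v (play sg)).
Proof.
  intros HG.
  assert (HW : Gamma (fun p => pref a o0 (v p) /\ in_cone g p)).
  { apply (H3 a (fun x => pref a o0 x)). intros x x' Hx Hx'. apply NNPP. intros Hn.
    destruct (H1 a) as [_ [_ H]]. exact (H _ _ _ Hn Hx' Hx). }
  destruct (H2 _ HW (fun h => d h = a \/ ~ extends g h)) as [[s1 Hs1]|[s2 Hs2]].
  - exfalso.
    destruct (HG (fun h e => s1 h (or_introl e))) as [r [[sg [Hsg Hr]] [Hc Hno]]].
    destruct (Hs1 (fun h _ => sg h)) as [Hw Hc2]. apply Hno.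
    subst r. rewrite (play_cone g sg (Defs.combine _ s1 (fun h _ => sg h))); auto.
    intros h Hext. unfold Defs.combine. destruct (excluded_middle_informative _) as [[e|ne]|ne].
    + apply Hsg; auto.
    + exfalso; auto.
    + reflexivity.
  - exists (Defs.combine (fun h => d h = a \/ ~ extends g h) (fun _ _ => c0) s2).
    intros sg Hsg Hc Hp.
    assert (E : Defs.combine (fun h => d h = a \/ ~ extends g h) (fun h _ => sg h) s2 = sg).
    { apply functional_extensionality. intros h. unfold Defs.combine.
      destruct (excluded_middle_informative _) as [H|H]; auto.
      rewrite Hsg.
      + unfold Defs.combine. destruct (excluded_middle_informative _) as [H'|H'].
        * exfalso; exact (H H').
        * f_equal. apply proof_irrelevance.
      + apply NNPP. tauto.
      + tauto. }
    apply (Hs2 (fun h _ => sg h)). rewrite E. split; auto.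
Qed.

Lemma firstn_ext {C} (g t : list C) : firstn (length g) (g ++ t) = g.
Proof. rewrite firstn_app, Nat.sub_diag, firstn_all. simpl. apply app_nil_r. Qed.

Theorem theorem27 (A C O : Type) (HA : inhabited A) (HC : inhabited C)
  (HO : inhabited O) (d : list C -> A) (v : (nat -> C) -> O)
  (pref : A -> O -> O -> Prop) (Gamma : ((nat -> C) -> Prop) -> Prop)
  (H1 : forall a, strict_weak_order (pref a))
  (H2 : forall W, Gamma W -> forall D : list C -> Prop, determined D W)
  (H3 : forall a (I : O -> Prop) (gamma : list C), terminal_interval pref a I ->
          Gamma (fun p => I (v p) /\ in_cone gamma p))
  (H4 : forall a (p : nat -> C) (phi : nat -> nat),
          (forall n, phi n < phi (S n)) ->
          (forall n, d (pre p (phi n)) = a /\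
             (forall o, G_ d v pref a (pre p (phi (S n))) o ->
                        G_ d v pref a (pre p (phi n)) o) /\
             (exists o, G_ d v pref a (pre p (phi n)) o /\
                        ~ G_ d v pref a (pre p (phi (S n))) o)) ->
          forall n, G_ d v pref a (pre p (phi n)) (v p))
  (H5 : forall a (gamma : list C), exists s : strategy d a,
          forall o, g_ d v pref a gamma s o <-> G_ d v pref a gamma o) :
  exists sigma : list C -> C, nash d v pref sigma.
Proof.
  destruct HC as [c0].
  pose (S := fun a g => proj1_sig (constructive_indefinite_description _ (H5 a g))).
  assert (HS : forall a g o, g_ d v pref a g (S a g) o <-> G_ d v pref a g o).
  { intros a g o. unfold S. destruct (constructive_indefinite_description _ _) as [s Hs]. simpl. apply Hs. }
  clearbody S.
  pose (Pm := fun h k => k <= length h /\ d (firstn k h) = d h /\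
        forall o, G_ d v pref (d h) (firstn k h) o <-> G_ d v pref (d h) h o).
  assert (Hm : forall h, exists k, Pm h k /\ forall k', Pm h k' -> k <= k').
  { intros h. apply least_ex. exists (length h). unfold Pm. rewrite firstn_all. split; auto. split; auto. tauto. }
  pose (mlen := fun h => proj1_sig (constructive_indefinite_description _ (Hm h))).
  assert (Hml : forall h, Pm h (mlen h) /\ forall k', Pm h k' -> mlen h <= k').
  { intros h. unfold mlen. destruct (constructive_indefinite_description _ _) as [k Hk]. exact Hk. }
  clearbody mlen. clear Hm.
  pose (tau := fun h => S (d h) (firstn (mlen h) h) h eq_refl).
  pose (p := play tau).
  pose (M := fun j => mlen (pre p j)).
  assert (HM1 : forall j, M j <= j /\ d (pre p (M j)) = d (pre p j) /\
     forall o, G_ d v pref (d (pre p j)) (pre p (M j)) o <-> G_ d v pref (d (pre p j)) (pre p j) o).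
  { intros j. destruct (Hml (pre p j)) as [[H1' [H2' H3']] _]. unfold M.
    rewrite pre_length in H1'. rewrite (firstn_pre p _ j H1') in H2', H3'. auto. }
  assert (HM2 : forall j k, k <= j -> d (pre p k) = d (pre p j) ->
     (forall o, G_ d v pref (d (pre p j)) (pre p k) o <-> G_ d v pref (d (pre p j)) (pre p j) o) ->
     M j <= k).
  { intros j k Hk Hd HG. destruct (Hml (pre p j)) as [_ Hmin]. apply Hmin. unfold Pm.
    rewrite pre_length, firstn_pre by auto. auto. }
  assert (Hstrat : forall a h (e : d h = a) g, S (d h) g h eq_refl = S a g h e).
  { intros a h e g. destruct e. reflexivity. }
  assert (Hpj : forall a j (e : d (pre p j) = a), p j = S a (pre p (M j)) (pre p j) e).
  { intros a j e. unfold p at 1. rewrite play_S. fold p. unfold tau. rewrite <- (Hstrat a (pre p j) e).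
    unfold M. rewrite firstn_pre; auto. apply HM1. }
  clearbody M.
  assert (HMeq : forall a i j, d (pre p i) = a -> d (pre p j) = a -> M i <= j ->
     (forall o, G_ d v pref a (pre p i) o <-> G_ d v pref a (pre p j) o) -> M j = M i).
  { intros a i j Hi Hj Hij HG.
    destruct (HM1 i) as [Mi1 [Mi2 Mi3]]. destruct (HM1 j) as [Mj1 [Mj2 Mj3]].
    rewrite Hi in Mi2, Mi3. rewrite Hj in Mj2, Mj3.
    apply Nat.le_antisymm.
    - apply HM2; auto; rewrite Hj; [congruence|]. intros o. rewrite Mi3. apply HG.
    - destruct (le_lt_dec (M j) i); [|lia].
      apply HM2; auto; rewrite Hi; [congruence|]. intros o. rewrite Mj3. symmetry. apply HG. }
  assert (Mono : forall a N i j, i <= j -> j <= N -> d (pre p i) = a -> d (pre p j) = a ->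
     forall o, G_ d v pref a (pre p j) o -> G_ d v pref a (pre p i) o).
  { intros a N. induction N as [|N IHN]; intros i j Hij HjN Hi Hj o HG.
    - replace i with j by lia. exact HG.
    - destruct (Nat.eq_dec j (Datatypes.S N)) as [Ej|Ej]; [|apply (IHN i j); auto; lia].
      subst j. destruct (Nat.eq_dec i (Datatypes.S N)) as [Ei|Ei]; [subst; auto|].
      destruct (greatest_ex (fun k => d (pre p k) = a) N i) as [n [Hn [Pn Hg]]]; [lia|auto|].
      apply (IHN i n); try lia; auto.
      destruct (HM1 n) as [Mn1 [Mn2 Mn3]]. rewrite Pn in Mn2, Mn3.
      apply Mn3. apply HS.
      apply (gsub d v pref a (S a (pre p (M n))) p (M n) (Datatypes.S N)); [lia| |].
      + intros j h e Eh Hj1 Hj2. subst h. rewrite (Hpj a j e).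
        assert (Hjn : j <= n).
        { destruct (le_lt_dec j n); auto. exfalso. apply (Hg j); auto. lia. }
        rewrite (HMeq a n j); auto.
        intros o'. split; intros HH.
        * apply (IHN j n); auto; lia.
        * apply Mn3. apply (IHN (M n) j); auto; lia.
      + apply HG. }
  assert (Mono' : forall a i j, i <= j -> d (pre p i) = a -> d (pre p j) = a ->
     forall o, G_ d v pref a (pre p j) o -> G_ d v pref a (pre p i) o).
  { intros a i j Hij. apply (Mono a j i j Hij (le_n j)). }
  clear Mono.
  assert (Hirr : forall a o, ~ pref a o o).
  { intros a o. destruct (H1 a) as [H _]. apply H. }
  assert (Onpath : forall a n, d (pre p n) = a -> G_ d v pref a (pre p n) (v p)).
  { intros a n Hn.
    destruct (classic (exists N, n <= N /\ d (pre p N) = a /\ forall n', N <= n' -> d (pre p n') = a ->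
               forall o, G_ d v pref a (pre p n') o <-> G_ d v pref a (pre p N) o))
      as [[N [HnN [HN Hst]]]|Hns].
    - apply (Mono' a n N HnN Hn HN).
      destruct (HM1 N) as [MN1 [MN2 MN3]]. rewrite HN in MN2, MN3.
      apply MN3. apply HS. exists p. split; [|split].
      + exists (Defs.combine (fun h => d h = a /\ extends (pre p (M N)) h)
                  (fun h H => S a (pre p (M N)) h (proj1 H)) (fun h _ => tau h)).
        split.
        * intros h e Hext. unfold Defs.combine.
          destruct (excluded_middle_informative _) as [H|H].
          -- f_equal. apply proof_irrelevance.
          -- exfalso. auto.
        * unfold p at 1. symmetry. apply pre_eq_fun. intros m. induction m; [reflexivity|].
          rewrite !pre_play_S, IHm. fold p. f_equal. f_equal. unfold Defs.combine.
          destruct (excluded_middle_informative _) as [[e He]|H]; [|reflexivity]. simpl.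
          assert (He' := extends_len _ _ He). rewrite !pre_length in He'.
          rewrite <- play_S. fold p. rewrite (Hpj a m e).
          rewrite (HMeq a N m); auto.
          f_equal; apply proof_irrelevance.
          intros o. destruct (le_lt_dec N m).
          -- symmetry. apply Hst; auto.
          -- split; intros HH.
             ++ apply (Mono' a m N); auto; lia.
             ++ apply MN3. apply (Mono' a (M N) m); auto.
      + unfold in_cone. rewrite pre_length. reflexivity.
      + apply Hirr.
    - assert (Hf : forall N, exists m, (n <= N /\ d (pre p N) = a) ->
          N < m /\ d (pre p m) = a /\ exists o, G_ d v pref a (pre p N) o /\ ~ G_ d v pref a (pre p m) o).
      { intros N. destruct (classic (n <= N /\ d (pre p N) = a)) as [[HnN HN]|HH];
          [|exists 0; tauto].
        destruct (classic (exists n', N <= n' /\ d (pre p n') = a /\ ~ forall o, G_ d v pref a (pre p n') o <-> G_ d v pref a (pre p N) o)) as [[n' [Hn1 [Hn2 Hn3]]]|HH].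
        - exists n'. intros _. apply not_all_ex_not in Hn3. destruct Hn3 as [o Ho].
          assert (Hsub := Mono' a N n' Hn1 HN Hn2 o).
          destruct (Nat.eq_dec N n') as [E|E]; [subst; tauto|].
          split; [lia|]. split; auto. exists o. tauto.
        - exfalso. apply Hns. exists N. split; auto. split; auto.
          intros n' Hn1 Hn2. apply NNPP. intros Hn3. apply HH. exists n'. auto. }
      pose (f := fun N => proj1_sig (constructive_indefinite_description _ (Hf N))).
      assert (Hf' : forall N, n <= N -> d (pre p N) = a ->
          N < f N /\ d (pre p (f N)) = a /\ exists o, G_ d v pref a (pre p N) o /\ ~ G_ d v pref a (pre p (f N)) o).
      { intros N H H'. unfold f. destruct (constructive_indefinite_description _ _) as [m Hm]. simpl. auto. }
      clearbody f.
      pose (phi := fun k => Nat.iter k f n).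
      assert (Hphi : forall k, n <= phi k /\ d (pre p (phi k)) = a).
      { induction k as [|k IH]; [simpl; auto|].
        destruct IH as [IH1 IH2]. destruct (Hf' _ IH1 IH2) as [F1 [F2 _]].
        change (phi (Datatypes.S k)) with (f (phi k)). split; auto; lia. }
      assert (A1 : forall k, phi k < phi (Datatypes.S k)).
      { intros k. destruct (Hphi k) as [P1 P2]. destruct (Hf' _ P1 P2) as [F1 _]. exact F1. }
      assert (A2 : forall k, d (pre p (phi k)) = a /\
             (forall o, G_ d v pref a (pre p (phi (Datatypes.S k))) o ->
                        G_ d v pref a (pre p (phi k)) o) /\
             (exists o, G_ d v pref a (pre p (phi k)) o /\
                        ~ G_ d v pref a (pre p (phi (Datatypes.S k))) o)).
      { intros k. destruct (Hphi k) as [P1 P2]. destruct (Hf' _ P1 P2) as [F1 [F2 F3]].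
        change (phi (Datatypes.S k)) with (f (phi k)). split; auto. split; auto.
        intros o. apply Mono'; auto. lia. }
      exact (H4 a p phi A1 A2 0). }
  assert (Hdv : forall h, exists k, firstn (Datatypes.S k) h <> pre p (Datatypes.S k) /\
                   forall k', firstn (Datatypes.S k') h <> pre p (Datatypes.S k') -> k <= k').
  { intros h. apply least_ex. exists (length h). rewrite firstn_all2 by lia. intros E.
    assert (E' := f_equal (@length C) E). rewrite pre_length in E'. lia. }
  pose (dv := fun h => proj1_sig (constructive_indefinite_description _ (Hdv h))).
  assert (Hdv' : forall h, firstn (Datatypes.S (dv h)) h <> pre p (Datatypes.S (dv h)) /\
                   forall k', firstn (Datatypes.S k') h <> pre p (Datatypes.S k') -> dv h <= k').
  { intros h. unfold dv. destruct (constructive_indefinite_description _ _) as [k Hk]. exact Hk. }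
  clearbody dv. clear Hdv.
  assert (Hdvn : forall n c h, c <> p n -> extends (pre p n ++ [c]) h ->
             dv h = n /\ firstn (Datatypes.S n) h = pre p n ++ [c]).
  { intros n c h Hc [t Ht]. subst h.
    assert (Fn : firstn (Datatypes.S n) ((pre p n ++ [c]) ++ t) = pre p n ++ [c]).
    { replace (Datatypes.S n) with (length (pre p n ++ [c])).
      - apply firstn_ext.
      - rewrite length_app, pre_length. simpl. lia. }
    split; auto.
    destruct (Hdv' ((pre p n ++ [c]) ++ t)) as [D1 D2].
    apply Nat.le_antisymm.
    - apply D2. rewrite Fn, pre_S. intros E. apply app_inj_tail in E. destruct E; auto.
    - destruct (le_lt_dec n (dv ((pre p n ++ [c]) ++ t))) as [l|l]; auto. exfalso. apply D1.
      set (k := dv ((pre p n ++ [c]) ++ t)) in *.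
      assert (Ek : firstn (Datatypes.S k) ((pre p n ++ [c]) ++ t) =
                   firstn (Datatypes.S k) (firstn (Datatypes.S n) ((pre p n ++ [c]) ++ t))).
      { rewrite firstn_firstn, Nat.min_l by lia. reflexivity. }
      rewrite Ek, Fn, firstn_app, pre_length.
      replace (Datatypes.S k - n) with 0 by lia. rewrite firstn_O.
      rewrite app_nil_r. apply firstn_pre. lia. }
  assert (HPun : forall a g, exists f : list C -> C, G_ d v pref a g (v p) ->
       forall sg, (forall h, extends g h -> d h <> a -> sg h = f h) ->
       in_cone g (play sg) -> ~ pref a (v p) (v (play sg))).
  { intros a g. destruct (classic (G_ d v pref a g (v p))) as [HG|HG].
    - destruct (punish d v pref Gamma c0 H1 H2 H3 a g (v p) HG) as [f Hf]. exists f. auto.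
    - exists (fun _ => c0). tauto. }
  pose (Pun := fun a g => proj1_sig (constructive_indefinite_description _ (HPun a g))).
  assert (HPun' : forall a g, G_ d v pref a g (v p) ->
       forall sg, (forall h, extends g h -> d h <> a -> sg h = Pun a g h) ->
       in_cone g (play sg) -> ~ pref a (v p) (v (play sg))).
  { intros a g. unfold Pun. destruct (constructive_indefinite_description _ _) as [f Hf]. exact Hf. }
  clearbody Pun. clear HPun.
  pose (sigma := fun h => match excluded_middle_informative (pre p (length h) = h) with
                          | left _ => tau h
                          | right _ => Pun (d (pre p (dv h))) (firstn (Datatypes.S (dv h)) h) h end).
  assert (Hplay : play sigma = p).
  { apply pre_eq_fun. intros m. induction m; [reflexivity|].
    rewrite pre_play_S, IHm. unfold p at 3. rewrite pre_play_S. fold p. f_equal. f_equal.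
    unfold sigma. destruct (excluded_middle_informative _) as [E|E]; auto.
    exfalso. apply E. rewrite pre_length. reflexivity. }
  exists sigma. intros [a [s Hpref]]. rewrite Hplay in Hpref.
  pose (q := play (deviate d sigma a s)). fold q in Hpref.
  destruct (classic (q = p)) as [Eq|Nq].
  { rewrite Eq in Hpref. exact (Hirr _ _ Hpref). }
  destruct (least_ex (fun m => q m <> p m)) as [n [Hn Hmin]].
  { apply NNPP. intros HH. apply Nq. apply functional_extensionality. intros m.
    apply NNPP. intros H'. apply HH. exists m. exact H'. }
  assert (Hpre : pre q n = pre p n).
  { unfold pre. apply map_ext_in. intros x Hx. apply in_seq in Hx.
    apply NNPP. intros H'. specialize (Hmin x H'). lia. }
  assert (Hqn : q n = deviate d sigma a s (pre p n)).
  { unfold q at 1. rewrite play_S. fold q. rewrite Hpre. reflexivity. }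
  assert (Hsp : sigma (pre p n) = p n).
  { unfold sigma. destruct (excluded_middle_informative _) as [E|E].
    - unfold p at 2. rewrite play_S. reflexivity.
    - exfalso. apply E. rewrite pre_length. reflexivity. }
  assert (e : d (pre p n) = a).
  { apply NNPP. intros ne. apply Hn. rewrite Hqn, <- Hsp. unfold deviate, Defs.combine.
    destruct (excluded_middle_informative _); tauto. }
  assert (HG := G_step d v pref a (pre p n) (q n) (v p) e (Onpath a n e)).
  apply (HPun' a (pre p n ++ [q n]) HG (deviate d sigma a s)); [| |exact Hpref].
  - intros h Hext Hda. unfold deviate at 1, Defs.combine.
    destruct (excluded_middle_informative _) as [E|E]; [tauto|].
    destruct (Hdvn n (q n) h Hn Hext) as [Hd1 Hd2].
    unfold sigma. destruct (excluded_middle_informative _) as [E'|E'].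
    + exfalso. apply Hn.
      assert (L := extends_len _ _ Hext). rewrite length_app, pre_length in L. simpl in L.
      assert (F : firstn (Datatypes.S n) (pre p (length h)) = firstn (Datatypes.S n) h) by congruence.
      rewrite Hd2, firstn_pre, pre_S in F by lia. apply app_inj_tail in F. destruct F; auto.
    + rewrite Hd1, Hd2, e. reflexivity.
  - unfold in_cone. fold q. rewrite length_app, pre_length. simpl.
    rewrite Nat.add_1_r, pre_S, Hpre. reflexivity.
Qed.
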